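(* For $n\ge1$ and $k\ge1$, let $\overline{\sigma}^k_n=(\sigma^k_n,n)$ be the sequence $\sigma^k_n$ followed by one additional term $n$ (this sequence has $k^nn!$ terms), and let $\mathrm{avg}(n,k)$ be the arithmetic mean of its terms. Then $$\mathrm{avg}(n,k)=\sum_{j=0}^{n-1}\frac{1}{k^j\,j!},$$ and consequently $\mathrm{avg}(n,k)<e^{1/k}$.
   Context: The sequence $\sigma^k_n$ of positive integers is defined recursively by $\sigma^k_1=1^{k-1}$ (the value $1$ repeated $k-1$ times; empty if $k=1$) and, for $n>1$, $\sigma^k_n=(\sigma^k_{n-1},n)^{kn-1},\sigma^k_{n-1}$, i.e. $kn-1$ copies of the block ''$\sigma^k_{n-1}$ followed by $n$'', followed by one more copy of $\sigma^k_{n-1}$. *)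

(* Defs.v *)
From mathcomp Require Import all_boot all_order all_algebra.
From mathcomp Require Import all_classical all_reals all_analysis.
Set Implicit Arguments. Unset Strict Implicit. Unset Printing Implicit Defensive.
Import Order.TTheory GRing.Theory Num.Theory.

(* sigma k n = \sigma^k_n  (for n >= 1; sigma k 0 = [::] is an unused dummy).
   sigma^k_1 = 1^{k-1};
   sigma^k_n = (sigma^k_{n-1}, n)^{kn-1}, sigma^k_{n-1}. *)
Fixpoint sigma (k n : nat) : seq nat :=
  match n with
  | 0 => [::]
  | m.+1 =>
      if m is 0 then nseq k.-1 1
      else flatten (nseq (k * n - 1) (rcons (sigma k m) n)) ++ sigma k m
  end.

Definition sigmabar (k n : nat) : seq nat := rcons (sigma k n) n.

Definition avg_seq {R : realType} (s : seq nat) : R :=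
  ((sumn s)%:R / (size s)%:R)%R.

Definition avg {R : realType} (n k : nat) : R := avg_seq (sigmabar k n).

(* Main.v *)
Require Import Defs.
From mathcomp Require Import all_boot all_order all_algebra.
From mathcomp Require Import all_classical all_reals all_analysis.
From mathcomp Require Import zify ring lra.
Import Order.TTheory GRing.Theory Num.Theory.
Lemma size_fl (c : nat) (s : seq nat) : size (flatten (nseq c s)) = (c * size s)%N.
Proof. elim: c => [|c IH] //=; rewrite size_cat IH mulSn. by []. Qed.
Lemma sumn_fl (c : nat) (s : seq nat) : sumn (flatten (nseq c s)) = (c * sumn s)%N.
Proof. elim: c => [|c IH] //=; rewrite sumn_cat IH mulSn. by []. Qed.

Lemma sigma_SS k m : sigma k m.+2 =
  flatten (nseq (k * m.+2 - 1) (rcons (sigma k m.+1) m.+2)) ++ sigma k m.+1.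
Proof. by []. Qed.

Lemma size_sig k m : (1 <= k)%N -> (size (sigma k m.+1)).+1 = (k ^ m.+1 * m.+1`!)%N.
Proof.
move=> hk; elim: m => [|m IH].
  by rewrite /= size_nseq expn1 muln1; lia.
have -> : (k ^ m.+2 * m.+2`! = (k ^ m.+1 * m.+1`!) * (k * m.+2))%N.
  by rewrite factS expnS; ring.
rewrite -IH sigma_SS size_cat size_fl size_rcons.
nia.
Qed.

Lemma sum_sig k m : (1 <= k)%N ->
  (sumn (sigma k m.+2) + m.+2 = k * m.+2 * (sumn (sigma k m.+1) + m.+1 + 1))%N.
Proof.
move=> hk; rewrite sigma_SS sumn_cat sumn_fl sumn_rcons. nia.
Qed.
Local Open Scope ring_scope.
Lemma partial_lt (R : realType) (x : R) n : 0 < x -> series (exp_coeff x) n < expR x.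
Proof.
move=> x0.
apply: (@lt_le_trans _ _ (series (exp_coeff x) n.+1)).
  rewrite seriesSr ltrDl /exp_coeff /= divr_gt0 // ?exprn_gt0 // ltr0n fact_gt0 //.
rewrite /expR.
apply: nondecreasing_cvgn_le; last exact: is_cvg_series_exp_coeff.
rewrite /series /=.
apply: (@nondecreasing_series R (exp_coeff x) xpredT 0) => m _ _.
exact/exp_coeff_ge0/ltW.
Qed.
Lemma sumn_nseq1 c : sumn (nseq c 1%N) = c.
Proof. by elim: c => //= c ->. Qed.

Lemma tb (R : realType) k m : (1 <= k)%N ->
  (sumn (sigmabar k m.+1))%:R =
  ((k ^ m.+1 * m.+1`!)%N%:R : R) * \sum_(j < m.+1) ((k ^ j * j`!)%:R)^-1.
Proof.
move=> hk; elim: m => [|m IH].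
  rewrite /sigmabar sumn_rcons /= sumn_nseq1 big_ord1 expn0 muln1 mul1n invr1 mulr1.
  by rewrite expn1; congr (_%:R); lia.
rewrite /sigmabar sumn_rcons sum_sig //.
rewrite /sigmabar sumn_rcons in IH.
have -> : (k ^ m.+2 * m.+2`! = (k ^ m.+1 * m.+1`!) * (k * m.+2))%N.
  by rewrite factS expnS; ring.
have hP : ((k ^ m.+1 * m.+1`!)%N%:R : R) != 0.
  by rewrite pnatr_eq0 -lt0n muln_gt0 expn_gt0 hk fact_gt0.
rewrite big_ord_recr /=.
move: IH hP; set P := (k ^ m.+1 * m.+1`!)%N; set S := \sum_(_ < _) _ => IH hP.
rewrite natrM natrD IH [(P * _)%:R]natrM [(k * _)%:R]natrM.
field.
exact: hP.
Qed.

Theorem lemma8 (R : realType) (n k : nat) (hn : (1 <= n)%N) (hk : (1 <= k)%N) :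
  size (sigmabar k n) = (k ^ n * n`!)%N /\
  avg (R := R) n k = \sum_(j < n) ((k ^ j * j`!)%:R)^-1 /\
  avg (R := R) n k < expR (k%:R^-1).
Proof.
case: n hn => [//|m] _.
have hs : size (sigmabar k m.+1) = (k ^ m.+1 * m.+1`!)%N.
  by rewrite /sigmabar size_rcons size_sig.
have ha : avg (R := R) m.+1 k = \sum_(j < m.+1) ((k ^ j * j`!)%:R)^-1.
  rewrite /avg /avg_seq hs tb // mulrC mulKf //.
  by rewrite pnatr_eq0 -lt0n muln_gt0 expn_gt0 hk fact_gt0.
split; first exact: hs.
split; first exact: ha.
rewrite ha.
have -> : \sum_(j < m.+1) ((k ^ j * j`!)%:R)^-1 = series (exp_coeff (k%:R^-1 : R)) m.+1.
  rewrite seriesEord /=; apply: eq_bigr => j _.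
  by rewrite /exp_coeff /= natrM invfM exprVn natrX.
apply: partial_lt.
by rewrite invr_gt0 ltr0n.
Qed.
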